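(* There exists a function $f\in\bigcap_{\alpha\in(0,1)}C^{0,\alpha}([0,1])$ which does not have the strong Sard property, i.e. $\mathcal{L}^1(f(S))>0$, but has the relaxed Sard property, i.e. $f_\#(\mathbf{1}_S\mathcal{L}^1)\perp\mathcal{L}^1$, where $S$ is the critical set of $f$.
   Context: $C^{0,\alpha}([0,1])$ is the space of $\alpha$-Hölder continuous real functions on $[0,1]$. $\mathcal{L}^1$ denotes Lebesgue measure on $\mathbb{R}$, $\mathbf{1}_A$ the indicator function of $A$, $f_\#\mu$ the pushforward of the measure $\mu$ under $f$, and $\mu\perp\nu$ means mutual singularity. The critical set $S$ of $f$ is the set of all points $x\in[0,1]$ at which $f$ is either not differentiable or has $f'(x)=0$. *)

(* Defs.v *)
From mathcomp Require Import all_boot all_order all_algebra.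
From mathcomp Require Import all_classical all_reals all_analysis.
Set Implicit Arguments. Unset Strict Implicit. Unset Printing Implicit Defensive.
Import Order.TTheory GRing.Theory Num.Theory.
Import numFieldNormedType.Exports.
Local Open Scope classical_set_scope.
Local Open Scope ring_scope.

Definition holder_on01 {R : realType} (alpha : R) (f : R -> R) : Prop :=
  exists C : R, forall x y : R, x \in `[0, 1] -> y \in `[0, 1] ->
    `|f x - f y| <= C * (`|x - y| `^ alpha).

Definition critical_set {R : realType} (f : R -> R) : set R :=
  [set x | x \in `[0, 1] /\ (~ derivable f x 1 \/ derive1 f x = 0)].

(* the pushforward measure f_#(1_S L^1), B |-> L^1(S ∩ f^{-1}(B)) *)
Definition push_restr {R : realType} (f : R -> R) (S : set R) (B : set R)
  : \bar R := (@lebesgue_measure R) (S `&` f @^-1` B).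

Definition singular_wrt_lebesgue {R : realType} (mu : set R -> \bar R) : Prop :=
  exists N : set R, measurable (N : set (measurableTypeR R)) /\
    (@lebesgue_measure R) N = 0%E /\ mu (~` N) = 0%E.

(* Main.v *)
Require Import Defs.
From mathcomp Require Import all_boot all_order all_algebra.
From mathcomp Require Import all_classical all_reals all_analysis.
From mathcomp Require Import ring lra.
Set Implicit Arguments. Unset Strict Implicit. Unset Printing Implicit Defensive.
Import Order.TTheory GRing.Theory Num.Theory.
Import numFieldNormedType.Exports.
Local Open Scope classical_set_scope.
Local Open Scope ring_scope.
Section Cantor.
Variable R : realType.

Definition w (m : nat) : R := ((2 ^+ m) * (m.+1)%:R)^-1.

Fixpoint G (m k : nat) : R :=
  if m is m'.+1 then G m' k./2 + (if odd k then w m else 0) else 0.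

Definition D (m k : nat) : R := k%:R / 2 ^+ m.

Lemma w_gt0 m : 0 < w m.
Proof. by rewrite /w invr_gt0 mulr_gt0 // ?exprn_gt0 // ltr0n. Qed.

Lemma w0 : w 0 = 1.
Proof. by rewrite /w expr0 mul1r invr1. Qed.

Lemma w_half m : w m.+1 * 2 <= w m.
Proof.
have -> : w m.+1 * 2 = (2 ^+ m * (m.+2)%:R)^-1.
  rewrite /w exprS; field.
  apply/andP; split; last by rewrite expf_neq0.
  by rewrite gt_eqF //; have := ler0n R m; lra.
rewrite /w ler_pV2 ?inE ?mulr_gt0 ?exprn_gt0 ?ltr0n //.
rewrite ler_pM2l ?exprn_gt0 // ?ler_nat ?ltnS ?leqnSn //.
all: by rewrite andbT unitfE mulf_neq0 ?expf_neq0 ?pnatr_eq0.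
Qed.

Lemma G_ge0 m k : 0 <= G m k.
Proof.
elim: m k => [|m IH] k //=; apply: addr_ge0 => //.
by case: ifP => _ //; apply: ltW; apply: w_gt0.
Qed.

Lemma G0 m : G m 0 = 0.
Proof. by elim: m => //= m ->; rewrite addr0. Qed.

Lemma G_lift m r k : G (m + r) (k * 2 ^ r) = G m k.
Proof.
elim: r k => [|r IH] k; first by rewrite addn0 expn0 muln1.
have E : (k * 2 ^ r.+1 = (k * 2 ^ r).*2)%N by rewrite expnS mulnCA mul2n.
by rewrite addnS /= E half_double odd_double addr0 IH.
Qed.

Lemma G_cyl m r k :
  G m (k %/ 2 ^ r) <= G (m + r) k <= G m (k %/ 2 ^ r) + w m - w (m + r).
Proof.
elim: r k => [|r IH] k.
  by rewrite expn0 divn1 addn0 addrK lexx.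
rewrite addnS /= expnS divnMA divn2.
have /andP[IH1 IH2] := IH k./2.
have h := w_half (m + r).
have hp := w_gt0 (m + r).+1.
apply/andP; split.
  by rewrite (le_trans IH1) // lerDl; case: ifP => // _; exact: ltW.
apply: le_trans (lerD IH2 (lexx _)) _.
case: ifP => _; lra.
Qed.

Lemma G_step m k : (k.+1 < 2 ^ m)%N -> G m k + w m <= G m k.+1.
Proof.
elim: m k => [|m IH] k; first by rewrite expn0.
move=> hk /=; rewrite uphalf_half.
have := odd_double_half k; case: (odd k) => /= kE.
  have hk' : ((k./2).+1 < 2 ^ m)%N.
    move: hk; set j := k./2; rewrite -kE expnS mul2n add1n -doubleS ltn_double.
    done.
  have := IH _ hk'; have := w_half m; rewrite add1n addr0; lra.
by rewrite add0n addr0.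
Qed.

Lemma G_lt m k k' : (k < k')%N -> (k' < 2 ^ m)%N -> G m k + w m <= G m k'.
Proof.
elim: k' => [|k' IH] //; rewrite ltnS leq_eqVlt => /orP[/eqP -> | kk'] hk'.
  exact: G_step.
have := IH kk' (ltnW hk'); have := G_step hk'; have := w_gt0 m; lra.
Qed.

Lemma G_le m k k' : (k <= k')%N -> (k' < 2 ^ m)%N -> G m k <= G m k'.
Proof.
rewrite leq_eqVlt => /orP[/eqP -> | kk'] hk' //.
have := G_lt kk' hk'; have := w_gt0 m; lra.
Qed.

Lemma G_bound m k : (k < 2 ^ m)%N -> G m k + w m <= 1.
Proof.
move=> _; have /andP[_] := G_cyl 0 m k; rewrite !add0n /= w0; lra.
Qed.

Lemma D_le_nat m k m' k' : (D m k <= D m' k') = (k * 2 ^ m' <= k' * 2 ^ m)%N.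
Proof.
rewrite /D ler_pdivrMr ?exprn_gt0 // mulrAC ler_pdivlMr ?exprn_gt0 //.
by rewrite -!natrX -!natrM ler_nat.
Qed.

Lemma D_lt_nat m k m' k' : (D m k < D m' k') = (k * 2 ^ m' < k' * 2 ^ m)%N.
Proof.
rewrite /D ltr_pdivrMr ?exprn_gt0 // mulrAC ltr_pdivlMr ?exprn_gt0 //.
by rewrite -!natrX -!natrM ltr_nat.
Qed.

Lemma G_cross_le m k m' k' : (k' < 2 ^ m')%N ->
  D m k <= D m' k' -> G m k <= G m' k'.
Proof.
move=> hk'; rewrite D_le_nat => hle.
rewrite -(G_lift m m' k) -(G_lift m' m k') addnC.
apply: G_le => //.
by rewrite expnD ltn_pmul2r ?expn_gt0.
Qed.

Lemma G_cross_lt m k m' k' : (k' < 2 ^ m')%N ->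
  D m k < D m' k' -> G m k < G m' k'.
Proof.
move=> hk'; rewrite D_lt_nat => hle.
rewrite -(G_lift m m' k) -(G_lift m' m k') addnC.
have := G_lt (m := m' + m) hle; rewrite expnD ltn_pmul2r ?expn_gt0 // => /(_ hk').
have := w_gt0 (m' + m); lra.
Qed.

Definition A (x : R) : set R :=
  [set d | exists m k, (k < 2 ^ m)%N /\ G m k <= x /\ d = D m k].
Definition fC (x : R) : R := sup (A x).

Lemma D_ge0 m k : 0 <= D m k.
Proof. by rewrite /D divr_ge0 // exprn_ge0. Qed.

Lemma D_lt1 m k : (k < 2 ^ m)%N -> D m k < 1.
Proof.
move=> hk; rewrite /D ltr_pdivrMr ?exprn_gt0 // mul1r -natrX ltr_nat //.
Qed.

Lemma A0 x : 0 <= x -> A x 0.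
Proof. by move=> x0; exists 0%N, 0%N; rewrite /= /D mul0r. Qed.

Lemma A_sup x : 0 <= x -> has_sup (A x).
Proof.
move=> x0; split; first by exists 0; exact: A0.
exists 1 => d [m [k [hk [_ ->]]]]; exact/ltW/D_lt1.
Qed.

Lemma f_ub x m k : 0 <= x -> (k < 2 ^ m)%N -> G m k <= x -> D m k <= fC x.
Proof.
move=> x0 hk hG; apply: (sup_upper_bound (A_sup x0)).
by exists m, k.
Qed.

Lemma f_le x y : 0 <= x ->
  (forall m k, (k < 2 ^ m)%N -> G m k <= x -> D m k <= y) -> fC x <= y.
Proof.
move=> x0 H; apply: ge_sup; first by exists 0; exact: A0.
by move=> d [m [k [hk [hG ->]]]]; exact: H.
Qed.

Lemma f_ge0 x : 0 <= x -> 0 <= fC x.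
Proof.
move=> x0; rewrite -[0](mul0r (2 ^+ 0 : R)^-1).
by apply: (@f_ub x 0%N 0%N) => //=.
Qed.

Lemma f_le1 x : 0 <= x -> fC x <= 1.
Proof. by move=> x0; apply: f_le => // m k hk _; exact/ltW/D_lt1. Qed.

Lemma f_mono x x' : 0 <= x -> x <= x' -> fC x <= fC x'.
Proof.
move=> x0 xx'; apply: f_le => // m k hk hG.
by apply: f_ub => //; [exact: le_trans xx'|exact: le_trans xx'].
Qed.

Lemma f_G m k : (k < 2 ^ m)%N -> fC (G m k) = D m k.
Proof.
move=> hk; apply/eqP; rewrite eq_le; apply/andP; split; last first.
  exact: f_ub (G_ge0 _ _) hk (lexx _).
apply: f_le; first exact: G_ge0.
move=> m' k' hk' hG; rewrite leNgt; apply/negP => /(G_cross_lt hk').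
by rewrite ltNge hG.
Qed.

Lemma f_adh x e : 0 <= x -> 0 < e ->
  exists m k, [/\ (k < 2 ^ m)%N, G m k <= x & fC x - e < D m k].
Proof.
move=> x0 e0; have [d [m [k [hk [hG ->]]]] hd] := sup_adherent e0 (A_sup x0).
by exists m, k.
Qed.

Lemma D_S m k : D m k.+1 = D m k + (2 ^+ m)^-1.
Proof. by rewrite /D -addn1 natrD mulrDl mul1r. Qed.

Lemma D_lt1_nat m k : D m k < 1 -> (k < 2 ^ m)%N.
Proof.
by rewrite /D ltr_pdivrMr ?exprn_gt0 // mul1r -natrX ltr_nat.
Qed.

Lemma f_mod m u v : 0 <= u -> u <= v -> v - u < w m ->
  fC v - fC u <= 3 * (2 ^+ m)^-1.
Proof.
move=> u0 uv vu; set e := (2 ^+ m : R)^-1.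
have e0 : 0 < e by rewrite invr_gt0 exprn_gt0.
rewrite leNgt; apply/negP => H.
have v0 : 0 <= v by exact: le_trans uv.
have [m' [k' [hk' hG' hD']]] := f_adh v0 e0.
have fu0 := f_ge0 u0.
set y := 2 ^+ m * fC u.
have y0 : 0 <= y by rewrite mulr_ge0 // exprn_ge0.
set k1 := (Num.truncn y).+1.
have pm : (0 : R) < 2 ^+ m by rewrite exprn_gt0.
have Dk1 : D m k1 = k1%:R * e by [].
have h1 : fC u < D m k1.
  rewrite Dk1 -(ltr_pM2l pm) mulrCA mulfV ?gt_eqF // mulr1.
  exact: truncnS_gt.
have h2 : D m k1 <= fC u + e.
  rewrite Dk1 -(ler_pM2l pm) mulrCA mulfV ?gt_eqF // mulr1 mulrDr mulfV ?gt_eqF //.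
  rewrite -/y /k1 -addn1 natrD lerD2r.
  by rewrite truncn_le.
have hD1 : D m k1.+1 <= D m' k' by rewrite D_S -/e; lra.
have hk1 : (k1.+1 < 2 ^ m)%N.
  by apply: D_lt1_nat; apply: le_lt_trans hD1 _; exact: D_lt1.
have g1 : u < G m k1.
  rewrite ltNge; apply/negP => hle.
  have := f_ub u0 (ltnW hk1) hle; lra.
have g2 : G m k1.+1 <= v.
  by apply: le_trans hG'; exact: G_cross_le hk' hD1.
have := G_step hk1; lra.
Qed.

Lemma exists_pow2 (e : R) : 0 < e -> exists n, (2 ^+ n : R)^-1 < e.
Proof.
move=> e0; set N := (Num.truncn e^-1).+1; exists N.
have pN : (0 : R) < 2 ^+ N by rewrite exprn_gt0.
rewrite -[(_)^-1]mul1r ltr_pdivrMr // -ltr_pdivrMl // mulr1.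
apply: lt_le_trans (truncnS_gt _) _; rewrite -/N -natrX ler_nat.
exact/ltnW/ltn_expl.
Qed.

Lemma w_le_pow2 m : w m <= (2 ^+ m)^-1.
Proof.
rewrite /w ler_pV2 ?inE ?unitfE ?mulf_neq0 ?expf_neq0 ?pnatr_eq0 //.
rewrite ler_pMr ?exprn_gt0 // ?ler1n //.
all: by rewrite ?mulr_gt0 ?exprn_gt0 ?ltr0n.
Qed.

Lemma exists_w (t : R) : 0 < t -> exists m, w m < t.
Proof.
move=> t0; have [n hn] := exists_pow2 t0; exists n.
exact: le_lt_trans (w_le_pow2 n) hn.
Qed.

Lemma f_unif (e : R) : 0 < e -> exists2 d : R, 0 < d &
  forall u v, 0 <= u -> 0 <= v -> `|u - v| < d -> `|fC u - fC v| < e.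
Proof.
move=> e0; have e3 : 0 < e / 3 by rewrite divr_gt0.
have [n hn] := exists_pow2 e3; exists (w n); first exact: w_gt0.
have key : forall u v, 0 <= u -> u <= v -> v - u < w n -> `|fC u - fC v| < e.
  move=> u v u0 uv vu; have := f_mod u0 uv vu; have := f_mono u0 uv.
  rewrite distrC; move=> h1 h2; rewrite ger0_norm ?subr_ge0 //.
  apply: le_lt_trans h2 _; move: hn; rewrite ltr_pdivlMr ?ltr0n //; lra.
move=> u v u0 v0 uv; have [le_uv|lt_vu] := leP u v.
  by apply: key => //; rewrite distrC ger0_norm ?subr_ge0 // in uv.
rewrite distrC; apply: key => //; first exact: ltW.
by rewrite ger0_norm ?subr_ge0 // in uv; exact: ltW.
Qed.

Lemma f_cont : {within `[0, 1], continuous fC}.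
Proof.
apply/subspace_continuousP => x /= x01.
have x0 : 0 <= x by move: x01; rewrite in_itv /= => /andP[].
apply/cvgrPdist_lt => e e0; rewrite near_withinE.
have [d d0 H] := f_unif e0.
apply/nbhs_ballP; exists d => // y /= xy y01.
have y0 : 0 <= y by move: y01; rewrite /= in_itv /= => /andP[].
by apply: H => //; move: xy; rewrite /ball /=.
Qed.

Lemma f0 : fC 0 = 0.
Proof. by have := @f_G 0 0 isT; rewrite /= /D mul0r. Qed.

Lemma f1 : fC 1 = 1.
Proof.
apply/eqP; rewrite eq_le f_le1 //=; rewrite leNgt; apply/negP => H.
have h0 : 0 < 1 - fC 1 by rewrite subr_gt0.
have [n hn] := exists_pow2 h0.
have hk : ((2 ^ n).-1 < 2 ^ n)%N by rewrite prednK ?expn_gt0.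
have hG : G n (2 ^ n).-1 <= 1 by have := G_bound hk; have := w_gt0 n; lra.
have := f_ub ler01 hk hG.
have := D_S n (2 ^ n).-1; rewrite prednK ?expn_gt0 //.
have -> : D n (2 ^ n) = 1 by rewrite /D natrX divff // expf_neq0.
lra.
Qed.

Lemma bern_aux (s : R) m : 1 <= s -> 1 + m%:R * (s - 1) <= s ^+ m.
Proof.
move=> s1; elim: m => [|m IH]; first by rewrite mul0r addr0 expr0.
rewrite exprS -natr1.
have m0 : (0 : R) <= m%:R by exact: ler0n.
have : s * (1 + m%:R * (s - 1)) <= s * s ^+ m by rewrite ler_pM2l //; lra.
have s10 : 0 <= s - 1 by lra.
have := mulr_ge0 m0 (mulr_ge0 s10 s10).
nra.
Qed.

Lemma bern (q : R) : 0 < q < 1 ->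
  exists2 B : R, 0 < B & forall m, (m.+1)%:R * q ^+ m <= B.
Proof.
case/andP=> q0 q1; set s := q^-1.
have s1 : 1 < s by rewrite /s invf_gt1.
set c := Num.min 1 (s - 1).
have c0 : 0 < c by rewrite /c lt_min ltr01 subr_gt0 s1.
exists c^-1; first by rewrite invr_gt0.
move=> m; have := bern_aux m (ltW s1).
have hc1 : c <= 1 by rewrite /c ge_min lexx.
have hc2 : c <= s - 1 by rewrite /c ge_min lexx orbT.
have m0 : (0 : R) <= m%:R by exact: ler0n.
have hm : (m.+1)%:R * c <= s ^+ m -> (m.+1)%:R * q ^+ m <= c^-1.
  move=> h; rewrite -(ler_pM2l c0) mulfV ?gt_eqF // mulrA [c * _]mulrC.
  have qm0 : 0 < q ^+ m by rewrite exprn_gt0.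
  have sm0 : 0 < s ^+ m by rewrite exprn_gt0 // (lt_trans ltr01 s1).
  rewrite -(ler_pM2r sm0) -mulrA -exprMn.
  by rewrite /s mulfV ?gt_eqF // expr1n mulr1 mul1r.
move=> h; apply: hm; rewrite -natr1.
have := ler_wpM2r m0 hc2.
nra.
Qed.

Lemma w_pow (al : R) : 0 < al < 1 ->
  exists2 C : R, 0 < C & forall m, (2 ^+ m)^-1 <= C * (w m) `^ al.
Proof.
case/andP=> a0 a1; set p := al^-1; set h : R := 2^-1.
have p1 : 1 < p by rewrite /p invf_gt1.
have h0 : 0 < h by rewrite /h invr_gt0.
have h1 : h < 1 by rewrite /h invf_lt1 // ltr1n.
set q := h `^ (p - 1).
have q0 : 0 < q by rewrite /q powR_gt0.
have pm1 : 0 < p - 1 by rewrite subr_gt0.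
have q1 : q < 1.
  have := @gt0_ltr_powR R (p - 1) pm1 h 1.
  rewrite powR1 => H; apply: H => //; rewrite nnegrE ?ler01 //; exact: ltW.
have qq : 0 < q < 1 by rewrite q0 q1.
have [B B0 hB] := bern qq.
have hp : h `^ p = h * q.
  rewrite /q -[X in X * _](powRr1 (ltW h0)) -powRD; last by apply/implyP => _; rewrite gt_eqF.
  by rewrite addrC subrK.
have hw : forall m, B^-1 * (h `^ p) ^+ m <= w m.
  move=> m; rewrite hp exprMn /w invfM /h exprVn mulrCA ler_pM2l ?invr_gt0 ?exprn_gt0 //.
  rewrite -(ler_pM2l B0) mulrA mulfV ?gt_eqF // mul1r.
  rewrite -(ler_pM2r (ltr0Sn R m)) mulfVK ?pnatr_eq0 // mulrC.
  exact: hB.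
have hpow : forall m, ((h `^ p) ^+ m) `^ al = h ^+ m.
  move=> m; rewrite -powR_mulrn ?powR_ge0 // -!powRrM.
  by rewrite mulrCA /p mulVf ?gt_eqF // mulr1 powR_mulrn // ltW.
set C := (B^-1 `^ al)^-1.
have Bal : 0 < B^-1 `^ al by rewrite powR_gt0 // invr_gt0.
exists C; first by rewrite invr_gt0.
move=> m.
have : (B^-1 * (h `^ p) ^+ m) `^ al <= (w m) `^ al.
  apply: ge0_ler_powR; rewrite ?nnegrE.
  - exact: ltW.
  - by rewrite mulr_ge0 ?exprn_ge0 ?powR_ge0 // invr_ge0 ltW.
  - exact/ltW/w_gt0.
  - exact: hw.
have Bi0 : 0 <= B^-1 by rewrite invr_ge0 ltW.
rewrite powRM // ?exprn_ge0 ?powR_ge0 // hpow.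
rewrite /C -(ler_pM2l Bal) mulrA mulfV ?gt_eqF // mul1r.
by rewrite /h exprVn.
Qed.

Lemma f_holder (al : R) : 0 < al < 1 -> holder_on01 al fC.
Proof.
move=> hal; have [C C0 hC] := w_pow hal.
have al0 : 0 < al by case/andP: hal.
exists (6 * C).
have key : forall u v, 0 <= u -> u < v -> v <= 1 ->
    fC v - fC u <= 6 * C * (v - u) `^ al.
  move=> u v u0 uv v1; set t := v - u.
  have t0 : 0 < t by rewrite /t subr_gt0.
  have exP : exists m, w m <= t.
    by have [m hm] := exists_w t0; exists m; exact: ltW.
  case: (ex_minnP exP) => m hm hmin.
  have v0 : 0 <= v by apply: le_trans (ltW uv).
  have hf : fC v - fC u <= 6 * (2 ^+ m)^-1.
    case: m hm hmin => [|m] hm hmin.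
      have := f_le1 v0; have := f_ge0 u0; rewrite expr0 invr1; lra.
    have hlt : v - u < w m.
      by rewrite ltNge; apply/negP => /hmin; rewrite ltnn.
    have := @f_mod m u v u0 (ltW uv) hlt; rewrite exprS invfM.
    have : 0 < (2 ^+ m : R)^-1 by rewrite invr_gt0 exprn_gt0.
    set z := (2 ^+ m)^-1; lra.
  apply: le_trans hf _.
  have h1 := hC m.
  have h2 : (w m) `^ al <= t `^ al.
    apply: ge0_ler_powR; rewrite ?nnegrE.
    - exact: ltW.
    - exact/ltW/w_gt0.
    - exact: ltW.
    - exact: hm.
  have h3 : C * (w m) `^ al <= C * t `^ al by rewrite ler_pM2l.
  lra.
move=> x y; rewrite !in_itv /= => /andP[x0 x1] /andP[y0 y1].
have [xy|yx|->] := ltgtP x y.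
- rewrite distrC (distrC x) !ger0_norm ?subr_ge0 ?(ltW xy) ?f_mono ?(ltW xy) //.
  exact: key.
- rewrite !ger0_norm ?subr_ge0 ?(ltW yx) ?f_mono ?(ltW yx) //.
  exact: key.
- by rewrite !subrr normr0 mulr_ge0 ?powR_ge0 // mulr_ge0 // ltW.
Qed.

Definition Kset : set R := [set x | x \in `[0, 1] /\
  forall m, exists k, (k < 2 ^ m)%N /\ G m k <= x <= G m k + w m].

Lemma w_anti m n : (m <= n)%N -> w n <= w m.
Proof.
elim: n => [|n IH]; first by rewrite leqn0 => /eqP ->.
rewrite leq_eqVlt => /orP[/eqP -> //| ]; rewrite ltnS => /IH h.
have := w_half n; have := w_gt0 n.+1; lra.
Qed.

Lemma G_odd m k : G m.+1 k.*2.+1 = G m k + w m.+1.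
Proof. by rewrite /= uphalf_double odd_double. Qed.

Lemma D_odd m k : D m.+1 k.*2.+1 = D m k + (2 ^+ m.+1)^-1.
Proof.
rewrite D_S; congr (_ + _); rewrite /D -muln2 natrM exprS.
field; by rewrite expf_neq0.
Qed.

Lemma not_deriv x : Kset x -> ~ derivable fC x 1.
Proof.
move=> [x01 Hx] /cvg_ex [l Hl].
move/cvgrPdist_lt: Hl => /(_ 1 ltr01).
rewrite /dnbhs /within /= => /nbhs_ballP [d /= d0 Hd].
have Q : forall h : R, h != 0 -> `|h| < d -> `|l - (fC (h + x) - fC x) / h| < 1.
  move=> h h0 hd; have := Hd h _ h0.
  rewrite /ball /= sub0r normrN => /(_ hd).
  by rewrite /GRing.scale /= mulr1 mulrC.
have [x0 x1] : 0 <= x /\ x <= 1 by move: x01; rewrite in_itv /= => /andP[].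
set M := Num.truncn (2 * (`|l| + 1)).
have [m1 hm1] := exists_w d0.
set m := maxn m1 M.
have wm : w m < d := le_lt_trans (w_anti (leq_maxl m1 M)) hm1.
set s : R := (m.+1)%:R / 2.
have sl : `|l| + 1 < s.
  rewrite /s ltr_pdivlMr ?ltr0n // mulrC.
  apply: lt_le_trans (truncnS_gt _) _; rewrite -/M ler_nat ltnS.
  exact: leq_maxr.
have [k [hk /andP [ax xb]]] := Hx m.
set a := G m k; set b := G m k + w m.
have a0 : 0 <= a by exact: G_ge0.
have hb : b = a + w m by [].
have {ax} ax : a <= x := ax.
have {xb} xb : x <= b := xb.
have fa : fC a = D m k := f_G hk.
have hk2 : (k.*2.+1 < 2 ^ m.+1)%N by rewrite expnS mul2n ltn_Sdouble.
have fb : D m k + (2 ^+ m.+1)^-1 <= fC b.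
  rewrite -D_odd -(f_G hk2); apply: f_mono; first exact: G_ge0.
  by rewrite G_odd /b lerD2l; apply: w_anti; exact: leqnSn.
have e1 : (2 ^+ m.+1 : R)^-1 = s * w m.
  rewrite /s /w exprS; field.
  by rewrite expf_neq0 // andbT gt_eqF //; have := ler0n R m; lra.
have wm0 := w_gt0 m.
have hsb : s * b = s * a + s * w m by rewrite /b mulrDr.
have fin : forall h, h != 0 -> `|h| < d -> s <= (fC (h + x) - fC x) / h -> False.
  move=> h h0 hd hq; have := Q h h0 hd; set q := (fC (h + x) - fC x) / h in hq *.
  have := ler_norm (q - l); rewrite distrC; have := ler_norm l; lra.
have case1 : x < b -> s * (b - x) <= fC b - fC x -> False.
  move=> xb' hsl; apply: (fin (b - x)).
  - by rewrite subr_eq0 gt_eqF.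
  - by rewrite ger0_norm ?subr_ge0 ?ltW //; lra.
  - by rewrite subrK ler_pdivlMr ?subr_gt0.
have case2 : a < x -> s * (x - a) <= fC x - fC a -> False.
  move=> ax' hsl; apply: (fin (a - x)).
  - by rewrite subr_eq0 lt_eqF.
  - by rewrite distrC ger0_norm ?subr_ge0 ?ltW //; lra.
  - rewrite subrK -[a - x]opprB invrN mulrN -mulNr opprB.
    by rewrite ler_pdivlMr ?subr_gt0.
case: (ltrP x b) => xb'.
  case: (lerP (s * (b - x)) (fC b - fC x)) => hsl; first exact: case1.
  have ax2 : a < x.
    rewrite lt_neqAle ax andbT; apply/negP => /eqP eax.
    rewrite -eax in hsl; lra.
  by apply: case2 => //; lra.
have xb2 : x = b by apply/eqP; rewrite eq_le xb xb'.
have hsx : s * x = s * b by rewrite xb2.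
have fxb : fC x = fC b by rewrite xb2.
apply: case2; first lra.
lra.
Qed.

Definition Dy : set R := \bigcup_(m in [set: nat]) \bigcup_(k in [set: nat]) [set D m k].

Lemma Dy_countable : countable Dy.
Proof.
apply: bigcup_countable; first exact: countableP.
move=> m _; apply: bigcup_countable; first exact: countableP.
move=> k _; exact: finite_set_countable (finite_set1 _).
Qed.

Lemma D_lift m r k : D (m + r) (k * 2 ^ r) = D m k.
Proof. rewrite /D natrM natrX exprD; field.
by rewrite !expf_neq0.
Qed.

Lemma gap x : x \in `[0, 1] -> ~ Dy (fC x) -> Kset x.
Proof.
move=> x01 nD; split => // m.
have [x0 x1] : 0 <= x /\ x <= 1 by move: x01; rewrite in_itv /= => /andP[].
set y := fC x.
have y0 : 0 <= y := f_ge0 x0.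
have ndy : forall m k, y != D m k.
  by move=> m' k'; apply/eqP => e; apply: nD; exists m' => //; exists k'.
have y1 : y < 1.
  rewrite lt_neqAle f_le1 // andbT.
  by have := ndy 0%N 1%N; rewrite /D expr0 divr1.
have pm : (0 : R) < 2 ^+ m by rewrite exprn_gt0.
set k := Num.truncn (2 ^+ m * y).
have hkl : D m k < y.
  rewrite lt_neqAle eq_sym ndy /= /D ler_pdivrMr // mulrC.
  by rewrite truncn_le mulr_ge0 // ltW.
have hku : y < D m k.+1.
  by rewrite /D ltr_pdivlMr // mulrC truncnS_gt.
have hk : (k < 2 ^ m)%N by apply: D_lt1_nat; exact: lt_trans y1.
exists k; split => //; apply/andP; split.
  have e0 : 0 < y - D m k by rewrite subr_gt0.
  have [m' [k' [hk' hG' hD']]] := f_adh x0 e0.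
  apply: le_trans hG'; apply: G_cross_le hk' _.
  by apply: ltW; move: hD'; rewrite -/y; lra.
rewrite leNgt; apply/negP => hx.
have e0 : 0 < D m k.+1 - y by rewrite subr_gt0.
have [r hr] := exists_pow2 e0.
have p2r : (0 < 2 ^ r)%N by rewrite expn_gt0.
set k' := (k * 2 ^ r + (2 ^ r).-1)%N.
have k'S : k'.+1 = (k.+1 * 2 ^ r)%N by rewrite /k' -addnS prednK // mulSnr.
have hk'div : (k' %/ 2 ^ r = k)%N.
  by rewrite /k' divnMDl // divn_small ?addn0 // prednK.
have hk' : (k' < 2 ^ (m + r))%N.
  by rewrite -ltnS k'S expnD ltnS leq_mul2r hk orbT.
have hG : G (m + r) k' <= G m k + w m.
  have /andP[_] := G_cyl m r k'; rewrite hk'div.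
  have := w_gt0 (m + r); lra.
have hD : D (m + r) k' = D m k.+1 - (2 ^+ (m + r))^-1.
  by rewrite -(D_lift m r k.+1) -k'S D_S addrK.
have hpow : (2 ^+ (m + r) : R)^-1 <= (2 ^+ r)^-1.
  rewrite lef_pV2 ?posrE ?exprn_gt0 // exprD ler_peMl ?exprn_gt0 //.
  by rewrite exprn_ege1 // ler1n.
have := f_ub x0 hk' (le_trans hG (ltW hx)); rewrite -/y hD; lra.
Qed.

Local Notation mu := (@lebesgue_measure R).

Lemma ereal_small (z : \bar R) : (0 <= z)%E ->
  (forall m : nat, (z <= ((m.+1)%:R^-1)%:E)%E) -> z = 0%E.
Proof.
move=> z0 H; have := H 0%N; case: z z0 H => [r| |] //= r0 H _.
have r0' : 0 <= r by rewrite -lee_fin.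
congr (_%:E); apply/eqP; rewrite eq_le r0' andbT leNgt; apply/negP => rp.
set n := Num.truncn r^-1.
have := H n; rewrite lee_fin => hr.
have : r^-1 < n.+1%:R := truncnS_gt _.
rewrite -(ltr_pM2l rp) mulfV ?gt_eqF //.
have : r * n.+1%:R <= 1.
  by rewrite -(ler_pM2r (ltr0Sn R n)) in hr; rewrite mulVf ?pnatr_eq0 // in hr.
lra.
Qed.

Lemma Kset_null : mu Kset = 0%E.
Proof.
apply: ereal_small; first exact: measure_ge0.
move=> m.
set F := fun i : nat => `[G m i, G m i + w m]%classic : set R.
have sub : Kset `<=` \big[setU/set0]_(i < 2 ^ m) F i.
  move=> x [_ /(_ m) [k [hk hx]]]; rewrite -bigcup_mkord.
  by exists k => //; rewrite /F /= in_itv /=.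
have h1 : (mu Kset <= mu (\big[setU/set0]_(i < 2 ^ m) F i))%E.
  exact: le_outer_measure.
apply: (le_trans h1).
have h2 : (mu (\big[setU/set0]_(i < 2 ^ m) F i) <= \sum_(i < 2 ^ m) mu (F i))%E.
  exact: outer_measure_subadditive.
apply: (le_trans h2).
have -> : \sum_(i < 2 ^ m) mu (F i) = \sum_(i < 2 ^ m) (w m)%:E.
  apply: eq_bigr => i _; rewrite /F lebesgue_measure_itv /= lte_fin.
  by rewrite ltrDl w_gt0 /= -EFinD addrAC subrr add0r.
rewrite sumEFin sumr_const card_ord lee_fin -(mulr_natr (w m) (2 ^ m)) natrX /w.
rewrite invfM mulrAC mulVf ?mul1r // expf_neq0 //.
Qed.
End Cantor.

Theorem theorem4 (R : realType) :
  exists f : R -> R,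
    (forall alpha : R, 0 < alpha < 1 -> holder_on01 alpha f) /\
    (0 < (@lebesgue_measure R) (f @` critical_set f))%E /\
    singular_wrt_lebesgue (push_restr f (critical_set f)).
Proof.
exists (@fC R); split; first exact: f_holder.
have crit : forall x, Kset x -> critical_set (@fC R) x.
  by move=> x hK; split; [case: hK | left; exact: not_deriv].
split.
- set T := [set y : R | y \in `[0, 1] /\ ~ (@Dy R) y].
  have TS : T `<=` (@fC R) @` critical_set (@fC R).
    move=> y [y01 nDy].
    have [y0 y1] : 0 <= y /\ y <= 1 by move: y01; rewrite in_itv /= => /andP[].
    have [c c01 fc] : exists2 c, c \in `[0, 1] & fC c = y.
      apply: IVT; first exact: ler01.
        exact: f_cont.
      by rewrite f0 f1 ge_min le_max y0 y1 orbT.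
    by exists c => //; apply: crit; apply: gap => //; rewrite fc.
  have sub : `[0, 1]%classic `<=` T `|` (@Dy R).
    move=> y y01; have [hD|hD] := pselect (@Dy R y); first by right.
    by left.
  have h1 : (@lebesgue_measure R (`[0%R, 1%R]%classic : set R) <= @lebesgue_measure R (T `|` (@Dy R)))%E.
    exact: le_outer_measure.
  have h2 : (@lebesgue_measure R (T `|` (@Dy R)) <= @lebesgue_measure R T + @lebesgue_measure R (@Dy R))%E.
    exact: outer_measureU2.
  have h3 : (@lebesgue_measure R T <= @lebesgue_measure R ((@fC R) @` critical_set (@fC R)))%E.
    exact: le_outer_measure.
  rewrite (countable_lebesgue_measure0 (@Dy_countable R)) adde0 in h2.
  rewrite lebesgue_measure_itv /= lte_fin ltr01 /= sube0 in h1.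
  apply: lt_le_trans h3; apply: lt_le_trans (le_trans h1 h2).
  by rewrite lte_fin.
- exists (@Dy R); split.
    apply: countable_measurable; last exact: Dy_countable.
    by move=> t; exact: measurable_set1.
  split; first exact: countable_lebesgue_measure0 (@Dy_countable R).
  rewrite /push_restr; apply/eqP; rewrite eq_le measure_ge0 andbT.
  have sub : (critical_set (@fC R) `&` (@fC R) @^-1` (~` (@Dy R))) `<=` Kset (R := R).
    by move=> x [[x01 _] nD]; exact: gap.
  rewrite -(Kset_null R); exact: le_outer_measure.
Qed.
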